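(* Let $T$ be a tournament of odd order $n\ge 5$ and let $c_5(T)$ be the number of directed cycles of length $5$ in $T$. Then $$c_5(T)\le \frac{(n+1)n(n-1)(n-2)(n-3)}{160},$$ with equality if and only if $T$ is doubly regular.
   Context: A tournament is an orientation of a complete graph. A tournament of order $n$ is doubly regular if it is regular (every out-degree equals $\frac{n-1}{2}$) and the out-set of every vertex induces a regular subtournament; equivalently, every two distinct vertices have exactly $\frac{n-3}{4}$ common out-neighbours (this forces $n\equiv 3\pmod 4$). *)

(* Defs.v *)
From mathcomp Require Import all_boot.
Set Implicit Arguments. Unset Strict Implicit. Unset Printing Implicit Defensive.

Definition tournament (T : finType) (e : rel T) : Prop :=
  (forall x, ~~ e x x) /\
  (forall x y, x != y -> e x y || e y x) /\
  (forall x y, e x y -> ~~ e y x).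

Definition outset (T : finType) (e : rel T) (v : T) : {set T} :=
  [set w | e v w].

Definition regular_on (T : finType) (e : rel T) (S : {set T}) : Prop :=
  forall u, u \in S -> 2 * #|[set w in S | e u w]| = #|S| - 1.

Definition regular_tournament (T : finType) (e : rel T) : Prop :=
  regular_on e [set: T].

Definition doubly_regular (T : finType) (e : rel T) : Prop :=
  regular_tournament e /\ (forall v, regular_on e (outset e v)).

(* Directed 5-cycles: closed walks (v0,...,v4) of pairwise distinct vertices
   with arcs v_i -> v_{i+1 mod 5}; each cycle corresponds to exactly 5 such
   sequences (its rotations), so we divide by 5. *)
Definition cyc5_seqs (T : finType) (e : rel T) : {set {ffun 'I_5 -> T}} :=
  [set f : {ffun 'I_5 -> T} | injectiveb f && [forall i, e (f i) (f (ordS i))]].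

Definition c5 (T : finType) (e : rel T) : nat := #|cyc5_seqs e| %/ 5.

(* Main.v *)
Set Warnings "-notation-overridden,-ambiguous-paths".
Require Import Defs.
From mathcomp Require Import all_boot.
From mathcomp Require Import all_algebra.
From mathcomp Require Import ring lra zify.
Import GRing.Theory Num.Theory.
Set Implicit Arguments. Unset Strict Implicit. Unset Printing Implicit Defensive.
Local Open Scope ring_scope.


Definition qf (R : comPzRingType) m (u : 'cV[R]_m) (X : 'M[R]_m) : R :=
  (u^T *m X *m u) 0 0.

Lemma mx11_mul (R : comPzRingType) (X Y : 'M[R]_1) : (X *m Y) 0 0 = X 0 0 * Y 0 0.
Proof. by rewrite mxE big_ord1. Qed.

Lemma grec (R : comPzRingType) m (u : 'cV[R]_m) (M P : 'M[R]_m) j k :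
  P = u *m u^T + M ->
  qf u (M ^+ j * P ^+ k.+1) = qf u (M ^+ j) * qf u (M ^+ 0 * P ^+ k) + qf u (M ^+ j.+1 * P ^+ k).
Proof.
move=> hP; rewrite expr0 mul1r; rewrite /qf exprS mulrA.
set Q := P ^+ k.
rewrite hP mulrDr mulrDl exprSr -!mulmxE.
rewrite mulmxDr mulmxDl mxE; congr (_ + _).
by rewrite -!mulmxA (mulmxA (M ^+ j) u) (mulmxA u^T) mx11_mul.
Qed.
Lemma tr11 (R : comPzRingType) (X : 'M[R]_1) : \tr X = X 0 0.
Proof. by rewrite /mxtrace big_ord1. Qed.

Lemma hstep (R : comPzRingType) m (u : 'cV[R]_m) (M P : 'M[R]_m) j k :
  P = u *m u^T + M ->
  P ^+ k.+1 * M ^+ j = P ^+ k * (u *m u^T) * M ^+ j + P ^+ k * M ^+ j.+1.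
Proof.
move=> hP; rewrite exprSr -mulrA.
set Q := P ^+ k.
by rewrite hP mulrDl mulrDr exprS !mulrA.
Qed.

Lemma trJ (R : comPzRingType) m (u : 'cV[R]_m) (M P : 'M[R]_m) j k :
  \tr (P ^+ k * (u *m u^T) * M ^+ j) = qf u (M ^+ j * P ^+ k).
Proof.
by rewrite -!mulmxE !mulmxA -(mulmxA _ u^T) mxtrace_mulC tr11 /qf !mulmxA.
Qed.

Lemma trP5 (R : comPzRingType) m (u : 'cV[R]_m) (M P : 'M[R]_m) :
  P = u *m u^T + M ->
  \tr (P ^+ 5) = qf u (P ^+ 4) + qf u (M ^+ 1 * P ^+ 3) + qf u (M ^+ 2 * P ^+ 2) +
  qf u (M ^+ 3 * P ^+ 1) + qf u (M ^+ 4 * P ^+ 0) + \tr (P ^+ 0 * M ^+ 5).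
Proof.
move=> hP.
have -> : P ^+ 5 = P ^+ 5 * M ^+ 0 by rewrite expr0 mulr1.
by rewrite !(hstep _ _ hP) !mxtraceD !trJ expr0 mul1r !addrA.
Qed.

Lemma trP5q (R : comPzRingType) m (u : 'cV[R]_m) (M P : 'M[R]_m) :
  P = u *m u^T + M ->
  let q k := qf u (M ^+ k) in
  \tr (P ^+ 5) = \tr (M ^+ 5) + 5 * q 4%N + 5 * q 0%N * q 3%N + 5 * q 1%N * q 2%N
   + 5 * q 0%N ^+ 2 * q 2%N + 5 * q 0%N * q 1%N ^+ 2 + 5 * q 0%N ^+ 3 * q 1%N + q 0%N ^+ 5.
Proof.
move=> hP q.
rewrite (trP5 hP) -[P ^+ 4](mul1r) -(expr0 M) !(grec _ _ hP) !expr0 !mulr1 mul1r.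
rewrite /q expr0; ring.
Qed.

Lemma int_eqN (x : int) : x = - x -> x = 0.
Proof. lia. Qed.

Lemma trmxX (R : comPzRingType) m (B : 'M[R]_m) k : (B ^+ k)^T = (B^T) ^+ k.
Proof.
elim: k => [|k IH]; first by rewrite !expr0 trmx1.
by rewrite exprS -mulmxE trmx_mul IH mulmxE -exprSr.
Qed.

Lemma skewX_odd m (B : 'M[int]_m) k : B^T = -B -> odd k -> (B ^+ k)^T = - B ^+ k.
Proof. by move=> hB ok; rewrite trmxX hB exprNn -signr_odd ok expr1 mulN1r. Qed.

Lemma qf_odd m (B : 'M[int]_m) (u : 'cV_m) k : B^T = -B -> odd k -> qf u (B ^+ k) = 0.
Proof.
move=> hB ok.
have h : (u^T *m B ^+ k *m u)^T = - (u^T *m B ^+ k *m u).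
  by rewrite !trmx_mul trmxK (skewX_odd hB ok) mulNmx mulmxN mulmxA.
move/(congr1 (fun Y : 'M_1 => Y 0 0)): h; rewrite !mxE /= /qf mxE.
by move/int_eqN.
Qed.

Lemma tr_odd m (B : 'M[int]_m) k : B^T = -B -> odd k -> \tr (B ^+ k) = 0.
Proof.
move=> hB ok; apply: int_eqN.
by rewrite -{1}mxtrace_tr (skewX_odd hB ok) linearN.
Qed.

Lemma qfB (R : comPzRingType) m (u : 'cV[R]_m) X Y : qf u (X - Y) = qf u X - qf u Y.
Proof. by rewrite /qf mulmxBr mulmxBl !mxE. Qed.

Lemma hrec (R : comPzRingType) m (u : 'cV[R]_m) (B : 'M[R]_m) k j :
  qf u ((B - 1) ^+ k.+1 * B ^+ j) = qf u ((B - 1) ^+ k * B ^+ j.+1) - qf u ((B - 1) ^+ k * B ^+ j).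
Proof. by rewrite exprSr -mulrA mulrBl mul1r -exprS mulrBr qfB. Qed.

Lemma trrec (R : comPzRingType) m (B : 'M[R]_m) k j :
  \tr ((B - 1) ^+ k.+1 * B ^+ j) = \tr ((B - 1) ^+ k * B ^+ j.+1) - \tr ((B - 1) ^+ k * B ^+ j).
Proof. by rewrite exprSr -mulrA mulrBl mul1r -exprS mulrBr linearB. Qed.

Lemma qf1 m : qf (const_mx 1 : 'cV[int]_m) 1 = m%:R.
Proof.
rewrite /qf mulmx1 mxE.
under eq_bigr do rewrite !mxE mulr1.
by rewrite sumr_const card_ord.
Qed.

Lemma tr_identity m (B : 'M[int]_m) : B^T = -B -> \tr (B ^+ 2) = - (m%:R * (m%:R - 1)) ->
  let u := (const_mx 1 : 'cV[int]_m) in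
  \tr ((u *m u^T + (B - 1)) ^+ 5) =
   m%:R ^+ 5 - 5 * m%:R ^+ 4 + 10 * m%:R ^+ 3 - 6 * m%:R - 5 * \tr (B ^+ 4)
   + 5 * qf u (B ^+ 4) + 5 * (m%:R ^+ 2 - 4 * m%:R + 6) * qf u (B ^+ 2).
Proof.
move=> hB htr2 u.
rewrite (trP5q (erefl _)) /=.
rewrite -[(B - 1) ^+ 5]mulr1 -(expr0 B) !trrec.
rewrite -[(B - 1) ^+ 4]mulr1 -[(B - 1) ^+ 3]mulr1 -[(B - 1) ^+ 2]mulr1 -[(B - 1) ^+ 1]mulr1.
rewrite -[qf u 1]/(qf u ((B - 1) ^+ 0)) -(mulr1 ((B - 1) ^+ 0)) -!(expr0 B) !hrec.
rewrite !expr0 !mul1r.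
rewrite (@tr_odd _ _ 5 hB) // (@tr_odd _ _ 3 hB) // (@tr_odd _ _ 1 hB) //.
rewrite (@qf_odd _ _ u 3 hB) // (@qf_odd _ _ u 1 hB) //.
rewrite htr2 qf1 mxtrace1; ring.
Qed.


Lemma int_eqN0 (x : int) : x = - x -> x = 0.
Proof. lia. Qed.

Lemma dsumZ (I : finType) (c : int) (f : I -> I -> int) :
  \sum_i \sum_j (c * f i j) = c * \sum_i \sum_j f i j.
Proof. by rewrite mulr_sumr; apply: eq_bigr => i _; rewrite mulr_sumr. Qed.

Lemma dsum_lin (I : finType) (a c d : I -> I -> int) :
  \sum_i \sum_j (a i j + c i j - d i j) =
  \sum_i \sum_j a i j + \sum_i \sum_j c i j - \sum_i \sum_j d i j.
Proof.
rewrite -big_split -sumrB /=; apply: eq_bigr => i _.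
by rewrite -big_split -sumrB.
Qed.

Lemma cs_skew (I : finType) (b : I -> I -> int) (w : I -> int) :
  (forall i j, b j i = - b i j) ->
  let y i := \sum_j b i j * w j in
  let K := \sum_i \sum_j b i j ^+ 2 in
  0 < K ->
  2 * \sum_i y i ^+ 2 <= K * \sum_i w i ^+ 2.
Proof.
move=> hb y K K0.
set Y := \sum_i y i ^+ 2; set W := \sum_i w i ^+ 2.
pose z i j := y i * w j - y j * w i.
have hY : Y = \sum_i \sum_j b i j * y i * w j.
  rewrite /Y; apply: eq_bigr => i _; rewrite expr2 {2}/y big_distrr /=.
  by apply: eq_bigr => j _; ring.
have hZ0 : \sum_i y i * w i = 0.
  rewrite /y; under eq_bigr do rewrite big_distrl /=.
  apply: int_eqN0.
  rewrite {1}exchange_big /= -sumrN; apply: eq_bigr => i _.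
  rewrite -sumrN; apply: eq_bigr => j _; rewrite hb; ring.
have e2 : \sum_i \sum_j b i j * y j * w i = - Y.
  rewrite hY exchange_big /= -sumrN; apply: eq_bigr => i _.
  rewrite -sumrN; apply: eq_bigr => j _; rewrite hb; ring.
have hbz : \sum_i \sum_j b i j * z i j = 2 * Y.
  transitivity (\sum_i \sum_j b i j * y i * w j - \sum_i \sum_j b i j * y j * w i).
    rewrite -sumrB; apply: eq_bigr => i _; rewrite -sumrB; apply: eq_bigr => j _.
    rewrite /z; ring.
  rewrite -hY e2; ring.
have E1 : \sum_i \sum_j y i ^+ 2 * w j ^+ 2 = Y * W by rewrite big_distrlr.
have E2 : \sum_i \sum_j w i ^+ 2 * y j ^+ 2 = W * Y by rewrite big_distrlr.
have E3 : \sum_i \sum_j 2 * ((y i * w i) * (y j * w j)) = 0.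
  by rewrite dsumZ -big_distrlr /= hZ0 mul0r mulr0.
have hzz : \sum_i \sum_j z i j ^+ 2 = 2 * Y * W.
  transitivity (\sum_i \sum_j (y i ^+ 2 * w j ^+ 2 + w i ^+ 2 * y j ^+ 2 - 2 * ((y i * w i) * (y j * w j)))).
    by apply: eq_bigr => i _; apply: eq_bigr => j _; rewrite /z; ring.
  rewrite dsum_lin E1 E2 E3; ring.
have hpos : 0 <= \sum_i \sum_j (2 * Y * b i j - K * z i j) ^+ 2.
  by apply: sumr_ge0 => i _; apply: sumr_ge0 => j _; apply: sqr_ge0.
have hexp : \sum_i \sum_j (2 * Y * b i j - K * z i j) ^+ 2 =
   4 * Y ^+ 2 * K - 4 * Y * K * \sum_i \sum_j b i j * z i j + K ^+ 2 * \sum_i \sum_j z i j ^+ 2.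
  transitivity (\sum_i \sum_j ((4 * Y ^+ 2) * b i j ^+ 2 + K ^+ 2 * z i j ^+ 2 - (4 * Y * K) * (b i j * z i j))).
    by apply: eq_bigr => i _; apply: eq_bigr => j _; ring.
  rewrite dsum_lin !dsumZ; ring.
rewrite hexp hbz hzz in hpos.
have Y0 : 0 <= Y by apply: sumr_ge0 => i _; apply: sqr_ge0.
have h2 : 0 <= (2 * K * Y) * (K * W - 2 * Y).
  by move: hpos; congr (_ <= _); ring.
have [->|Yp] := eqVneq Y 0; first by rewrite mulr0; apply: mulr_ge0 => //; [lia|apply: sumr_ge0 => i _; apply: sqr_ge0].
have Yp' : 0 < 2 * K * Y by lia.
rewrite pmulr_rge0 // in h2; lia.
Qed.


Definition bT (T : finType) (e : rel T) (x y : T) : int :=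
  if e x y then 1 else if e y x then -1 else 0.
Definition Bm (T : finType) (e : rel T) : 'M[int]_#|T| :=
  \matrix_(i, j) bT e (enum_val i) (enum_val j).
Definition Am (T : finType) (e : rel T) : 'M[int]_#|T| :=
  \matrix_(i, j) ((e (enum_val i) (enum_val j) : nat)%:R).

Lemma bT_anti (T : finType) (e : rel T) x y : tournament e -> bT e y x = - bT e x y.
Proof.
case=> h1 [h2 h3]; rewrite /bT.
case exy: (e x y); case eyx: (e y x) => //.
all: by have := h3 _ _ exy; rewrite eyx.
Qed.

Lemma bT_sq (T : finType) (e : rel T) x y : tournament e -> bT e x y ^+ 2 = (x != y)%:R.
Proof.
case=> h1 [h2 h3]; rewrite /bT.
have [->|nxy] := eqVneq x y; first by rewrite (negPf (h1 y)).
by have := h2 _ _ nxy; case: (e x y); case: (e y x).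
Qed.

Lemma bT_cube (T : finType) (e : rel T) x y : bT e x y ^+ 3 = bT e x y.
Proof. by rewrite /bT; case: (e x y); case: (e y x). Qed.

Lemma Bm_skew (T : finType) (e : rel T) : tournament e -> (Bm e)^T = - Bm e.
Proof. by move=> he; apply/matrixP => i j; rewrite !mxE bT_anti. Qed.

Lemma Bm_sq (T : finType) (e : rel T) i j : tournament e -> Bm e i j ^+ 2 = (i != j)%:R.
Proof. by move=> he; rewrite mxE bT_sq // (inj_eq enum_val_inj). Qed.

Lemma sum_eq1 m (i : 'I_m) : \sum_(k < m) ((k == i)%:R : int) = 1.
Proof.
rewrite (bigD1 i) //= eqxx big1 ?addr0 // => k /negPf -> //.
Qed.

Lemma sum_neq m (i : 'I_m) : \sum_(k < m) ((i != k)%:R : int) = m%:R - 1.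
Proof.
transitivity (\sum_(k < m) (1 - ((k == i)%:R : int))).
  by apply: eq_bigr => k _; rewrite eq_sym; case: (k == i).
by rewrite sumrB sum_eq1 sumr_const card_ord.
Qed.

Lemma trB2 (T : finType) (e : rel T) : tournament e ->
  \tr (Bm e ^+ 2) = - (#|T|%:R * (#|T|%:R - 1)).
Proof.
move=> he; rewrite expr2 -mulmxE /mxtrace.
transitivity (\sum_(i < #|T|) - (#|T|%:R - 1) : int); last first.
  by rewrite sumr_const card_ord; ring.
apply: eq_bigr => i _; rewrite mxE -(sum_neq i) -sumrN; apply: eq_bigr => k _.
have hk : Bm e k i = - Bm e i k by rewrite !mxE bT_anti.
by rewrite -(Bm_sq i k he) hk expr2 mulrN.
Qed.

Lemma Am2 (T : finType) (e : rel T) : tournament e ->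
  2%:R *: Am e = (const_mx 1 : 'cV[int]_#|T|) *m (const_mx 1)^T + (Bm e - 1).
Proof.
case=> h1 [h2 h3]; apply/matrixP => i j.
rewrite !mxE big_ord1 !mxE /bT.
have [->|nij] := eqVneq i j; first by rewrite (negPf (h1 _)).
have : enum_val i != enum_val j by rewrite (inj_eq enum_val_inj).
move=> /h2; case exy: (e _ _); case eyx: (e _ _) => //= _.
all: by have := h3 _ _ exy; rewrite eyx.
Qed.

Lemma Bm_anti (T : finType) (e : rel T) i j : tournament e -> Bm e j i = - Bm e i j.
Proof. by move=> he; rewrite !mxE bT_anti. Qed.

Lemma Bm_cube (T : finType) (e : rel T) i j : Bm e i j ^+ 3 = Bm e i j.
Proof. by rewrite mxE bT_cube. Qed.

Lemma hw (T : finType) (e : rel T) i :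
  (Bm e *m (const_mx 1 : 'cV[int]_#|T|)) i 0 = \sum_j Bm e i j.
Proof. by rewrite mxE; apply: eq_bigr => j _; rewrite [X in _ * X]mxE mulr1. Qed.

Lemma hwt (T : finType) (e : rel T) i : tournament e ->
  ((const_mx 1 : 'cV[int]_#|T|)^T *m Bm e) 0 i = - \sum_j Bm e i j.
Proof.
move=> he; rewrite mxE -sumrN; apply: eq_bigr => j _.
rewrite [X in X * _]mxE. rewrite [X in X * _]mxE. by rewrite mul1r (Bm_anti _ _ he) opprK.
Qed.

Lemma Csym (T : finType) (e : rel T) i j : tournament e ->
  (Bm e *m Bm e) j i = (Bm e *m Bm e) i j.
Proof.
move=> he; rewrite !mxE; apply: eq_bigr => k _.
by rewrite (Bm_anti j k he) (Bm_anti k i he) mulrNN mulrC.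
Qed.

Lemma F1 (T : finType) (e : rel T) : tournament e ->
  \tr (Bm e ^+ 4) = \sum_i \sum_j (Bm e *m Bm e) i j ^+ 2.
Proof.
move=> he; rewrite (exprD _ 2 2) expr2 -!mulmxE /mxtrace.
apply: eq_bigr => i _; rewrite mxE; apply: eq_bigr => j _.
by rewrite Csym // expr2.
Qed.

Lemma F2 (T : finType) (e : rel T) i : tournament e ->
  (Bm e *m Bm e) i i = - (#|T|%:R - 1).
Proof.
move=> he; rewrite mxE -(sum_neq i) -sumrN; apply: eq_bigr => k _.
by rewrite (Bm_anti i k he) -(Bm_sq i k he) expr2 mulrN.
Qed.

Lemma cube_dec (t : int) : t ^+ 3 = t -> t = t ^+ 2 - 2 * (t == -1)%:R.
Proof.
move=> h.
have e0 : t * ((t - 1) * (t + 1)) = t ^+ 3 - t by ring.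
have : t * ((t - 1) * (t + 1)) == 0 by rewrite e0 h subrr.
rewrite !mulf_eq0 => /orP [/eqP ->//|/orP [|]].
  by rewrite subr_eq0 => /eqP ->.
by rewrite addr_eq0 => /eqP ->.
Qed.

Lemma sum_neq2 m (i j : 'I_m) : i != j ->
  \sum_(k < m) (((i != k)%:R * (k != j)%:R) : int) = m%:R - 2.
Proof.
move=> nij.
transitivity (\sum_(k < m) (1 - ((k == i)%:R : int) - (k == j)%:R)).
  apply: eq_bigr => k _; rewrite [i == k]eq_sym.
  have [->|nki] := eqVneq k i; first by rewrite (negPf nij).
  by case: (k == j).
rewrite !sumrB !sum_eq1 sumr_const card_ord; ring.
Qed.

Lemma int_odd_ne0 (a s : int) : 2 * a + 1 - 2 - 2 * s != 0.
Proof. apply/eqP; lia. Qed.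

Lemma F3 (T : finType) (e : rel T) i j : tournament e -> odd #|T| -> i != j ->
  (Bm e *m Bm e) i j != 0.
Proof.
move=> he hodd nij.
pose t k := Bm e i k * Bm e k j.
have ht : forall k, t k = t k ^+ 2 - 2 * (t k == -1)%:R.
  by move=> k; apply: cube_dec; rewrite /t exprMn !Bm_cube.
have -> : (Bm e *m Bm e) i j = (#|T|%:R - 2) - 2 * \sum_k ((t k == -1)%:R : int).
  rewrite mxE -(sum_neq2 nij) mulr_sumr -sumrB; apply: eq_bigr => k _.
  by rewrite -/(t k) {1}ht /t exprMn !Bm_sq.
have hm : (#|T|%:R : int) = 2 * (#|T|./2)%:R + 1.
  have hn : #|T| = (#|T|./2).*2 + 1 by rewrite -{1}(odd_double_half #|T|) hodd addnC.
  by rewrite {1}hn natrD -muln2 natrM; ring.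
by rewrite hm; apply: int_odd_ne0.
Qed.

Lemma F4 (T : finType) (e : rel T) : tournament e ->
  qf (const_mx 1 : 'cV[int]_#|T|) (Bm e ^+ 2) = - \sum_i (\sum_j Bm e i j) ^+ 2.
Proof.
move=> he; rewrite /qf expr2 -mulmxE !mulmxA -(mulmxA _ (Bm e)) mxE -sumrN.
by apply: eq_bigr => i _; rewrite hwt // hw expr2 mulNr.
Qed.

Lemma F5 (T : finType) (e : rel T) : tournament e ->
  qf (const_mx 1 : 'cV[int]_#|T|) (Bm e ^+ 4) =
  \sum_i (\sum_j Bm e i j * \sum_k Bm e j k) ^+ 2.
Proof.
move=> he; rewrite /qf (exprD _ 2 2) !expr2 -!mulmxE !mulmxA.
rewrite -(mulmxA _ (Bm e) (const_mx 1)) -(mulmxA _ (Bm e)) mxE.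
apply: eq_bigr => i _; rewrite expr2; congr (_ * _).
  rewrite mxE; apply: eq_bigr => j _; rewrite hwt // -[Bm e j i]opprK -Bm_anti // mulrC.
  by rewrite mulNr mulrN opprK.
by rewrite mxE; apply: eq_bigr => j _; rewrite hw.
Qed.


Lemma sq_ge1 (c : int) : c != 0 -> 1 <= c ^+ 2.
Proof. move=> /eqP h; nia. Qed.

Lemma exprZ_mx m (c : int) (A : 'M[int]_m) k : (c *: A) ^+ k = c ^+ k *: A ^+ k.
Proof.
elim: k => [|k IH]; first by rewrite !expr0 scale1r.
by rewrite !exprS IH -!mulmxE -scalemxAl -scalemxAr scalerA.
Qed.

Lemma main_ineq (T : finType) (e : rel T) : tournament e -> odd #|T| -> (5 <= #|T|)%N ->
  let m := #|T|%:R : int in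
  let B := Bm e in
  let W := \sum_i (\sum_j B i j) ^+ 2 in
  let V := \sum_i (\sum_j B i j * \sum_k B j k) ^+ 2 in
  let D := \sum_i \sum_j ((B *m B) i j ^+ 2 - 1 - (i == j)%:R * ((m - 1) ^+ 2 - 1)) in
  [/\ 32 * \tr (Am e ^+ 5) = (m + 1) * m * (m - 1) * (m - 2) * (m - 3)
                              - 5 * (D + (m ^+ 2 - 4 * m + 6) * W - V),
      0 <= D, 0 <= W & 2 * V <= m * (m - 1) * W].
Proof.
move=> he hodd h5 m B W V D.
have hP := Am2 he.
have h32 : 32 * \tr (Am e ^+ 5) = \tr (((const_mx 1 : 'cV[int]_#|T|) *m (const_mx 1)^T + (Bm e - 1)) ^+ 5).
  by rewrite -hP exprZ_mx mxtraceZ.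
have hid := tr_identity (Bm_skew he) (trB2 he).
rewrite /= in hid.
have hF : \tr (B ^+ 4) = D + (m ^+ 3 - m ^+ 2).
  rewrite F1 // /D.
  have -> : m ^+ 3 - m ^+ 2 = \sum_(i < #|T|) \sum_(j < #|T|) (1 + (i == j)%:R * ((m - 1) ^+ 2 - 1)).
    transitivity (\sum_(i < #|T|) (m + ((m - 1) ^+ 2 - 1))); last first.
      apply: eq_bigr => i _; rewrite big_split /= -mulr_suml sumr_const card_ord.
      by rewrite (eq_bigr (fun j => (j == i)%:R)) ?sum_eq1 ?mul1r // => j _; rewrite eq_sym.
    by rewrite sumr_const card_ord -/m; rewrite -mulr_natl -/m; ring.
  rewrite -big_split /=; apply: eq_bigr => i _; rewrite -big_split /=.
  by apply: eq_bigr => j _; ring.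
split.
- rewrite h32 hid hF F4 // F5 // -/m -/W -/V; ring.
- apply: sumr_ge0 => i _; apply: sumr_ge0 => j _.
  have [->|nij] := eqVneq i j.
    by rewrite F2 // mul1r sqrrN subrr.
  rewrite mul0r subr0 subr_ge0; exact: sq_ge1 (F3 he hodd nij).
- by apply: sumr_ge0 => i _; apply: sqr_ge0.
- have K : \sum_i \sum_j B i j ^+ 2 = m * (m - 1).
    transitivity (\sum_(i < #|T|) (m - 1)).
      by apply: eq_bigr => i _; rewrite /B; under eq_bigr do rewrite Bm_sq //; rewrite sum_neq.
    by rewrite sumr_const card_ord -mulr_natl.
  have := @cs_skew _ B (fun i => \sum_j B i j) (fun i j => Bm_anti i j he).
  rewrite /= K; apply.
  rewrite /m; have : (1 < #|T|)%N by apply: leq_trans h5.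
  move: #|T| => k hk; rewrite natz; nia.
Qed.


Definition wT (T : finType) (e : rel T) x : int := \sum_y bT e x y.
Definition cT (T : finType) (e : rel T) x y : int := \sum_z bT e x z * bT e z y.

Lemma sum_ev (T : finType) (F : T -> int) :
  \sum_(i < #|T|) F (enum_val i) = \sum_x F x.
Proof.
rewrite (reindex (@enum_val T predT)) //.
by exists enum_rank => x _; [rewrite enum_valK | rewrite enum_rankK].
Qed.

Lemma Bw (T : finType) (e : rel T) i : \sum_j Bm e i j = wT e (enum_val i).
Proof. rewrite /wT -(sum_ev (bT e (enum_val i))); apply: eq_bigr => j _; by rewrite mxE. Qed.

Lemma Bc (T : finType) (e : rel T) i j : (Bm e *m Bm e) i j = cT e (enum_val i) (enum_val j).
Proof. rewrite mxE /cT -(sum_ev (fun z => bT e (enum_val i) z * bT e z (enum_val j))); apply: eq_bigr => k _; by rewrite !mxE. Qed.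

Lemma cardP (T : finType) (S : {set T}) (P : pred T) :
  #|[set z in S | P z]| = (\sum_(z in S) (P z : nat))%N.
Proof.
rewrite -sum1_card (eq_bigl (fun z => (z \in S) && P z)) => [|z]; last by rewrite inE.
by rewrite big_mkcondr /=; apply: eq_bigr => z _; case: (P z).
Qed.

Lemma inS_sum (T : finType) (S : {set T}) u : ((u \in S) : nat) = (\sum_(z in S) (z == u : nat))%N.
Proof.
case: (boolP (u \in S)) => hu.
  rewrite (bigD1 u) //= eqxx big1 // => z /andP [_ /negPf ->] //.
rewrite big1 // => z hz; case: eqP => // ezu; by rewrite -ezu hz in hu.
Qed.

Lemma card_split (T : finType) (e : rel T) (S : {set T}) u : tournament e ->
  (#|[set z in S | e u z]| + #|[set z in S | e z u]| + (u \in S) = #|S|)%N.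
Proof.
case=> h1 [h2 h3].
rewrite !cardP inS_sum -!big_split /= -sum1_card; apply: eq_bigr => z _.
have [->|nzu] := eqVneq z u; first by rewrite (negPf (h1 u)).
have := h2 _ _ nzu; case ezu: (e z u); case euz: (e u z) => //= _.
by have := h3 _ _ ezu; rewrite euz.
Qed.

Lemma sum_bT (T : finType) (e : rel T) (S : {set T}) u : tournament e ->
  \sum_(z in S) bT e u z = (#|[set z in S | e u z]|)%:R - (#|[set z in S | e z u]|)%:R.
Proof.
case=> h1 [h2 h3].
rewrite !cardP !natr_sum -sumrB; apply: eq_bigr => z _; rewrite /bT.
case euz: (e u z); case ezu: (e z u) => //=.
by have := h3 _ _ euz; rewrite ezu.
Qed.

Lemma reg_iff (T : finType) (e : rel T) (S : {set T}) u : tournament e -> u \in S ->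
  (2 * #|[set w in S | e u w]| = #|S| - 1)%N <-> \sum_(z in S) bT e u z = 0.
Proof.
move=> he hu; rewrite (sum_bT S u he) -(card_split S u he) hu.
move: #|[set z in S | e u z]| #|[set z in S | e z u]| => a b.
rewrite !natz; split => h; lia.
Qed.

Lemma sum_setT (T : finType) (F : T -> int) : \sum_(z in [set: T]) F z = \sum_z F z.
Proof. by apply: eq_bigl => z; rewrite in_setT. Qed.

Lemma sum_in (T : finType) (S : {set T}) (F : T -> int) :
  \sum_z ((z \in S)%:R * F z) = \sum_(z in S) F z.
Proof. by rewrite [RHS]big_mkcond /=; apply: eq_bigr => z _; case: (z \in S); rewrite ?mul1r ?mul0r. Qed.

Lemma sum_at (T : finType) (v : T) (F : T -> int) : \sum_z ((z == v)%:R * F z) = F v.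
Proof.
rewrite (bigD1 v) //= eqxx mul1r big1 ?addr0 // => z /negPf ->; by rewrite mul0r.
Qed.

Lemma cT_out (T : finType) (e : rel T) v u : tournament e -> e v u ->
  cT e v u = 1 + wT e u - 2 * \sum_(z in outset e v) bT e u z.
Proof.
move=> he evu; have [h1 [h2 h3]] := he.
transitivity (\sum_z (bT e u z - (z == v)%:R * bT e u z - 2 * ((z \in outset e v)%:R * bT e u z))).
  rewrite /cT; apply: eq_bigr => z _; rewrite (bT_anti u z he) inE.
  set t := bT e u z; rewrite /bT.
  have [->|nzv] := eqVneq z v; first by rewrite (negPf (h1 v)) /=; ring.
  have := h2 _ _ nzv; case ezv: (e z v); case evz: (e v z) => //= _; try ring.
rewrite !sumrB -mulr_sumr sum_at sum_in -/(wT e u).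
have -> : bT e u v = -1 by rewrite /bT (negPf (h3 _ _ evu)) evu.
ring.
Qed.

Lemma cT_sym (T : finType) (e : rel T) x y : tournament e -> cT e x y = cT e y x.
Proof.
move=> he; rewrite /cT; apply: eq_bigr => z _.
by rewrite (bT_anti x z he) (bT_anti z y he) mulrNN mulrC.
Qed.

Lemma cT_diag (T : finType) (e : rel T) x : tournament e -> cT e x x = - (#|T|%:R - 1).
Proof.
move=> he; have := F2 (enum_rank x) he; by rewrite Bc enum_rankK.
Qed.

Lemma sum_cT (T : finType) (e : rel T) x : \sum_y cT e x y = \sum_z bT e x z * wT e z.
Proof.
rewrite /cT exchange_big /=; apply: eq_bigr => z _; by rewrite /wT mulr_sumr.
Qed.

Lemma DR_fwd (T : finType) (e : rel T) : tournament e -> doubly_regular e ->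
  (forall x, wT e x = 0) /\ (forall x y, x != y -> cT e x y = 1).
Proof.
move=> he [hreg hout].
have hw : forall x, wT e x = 0.
  move=> x; have := hreg x (in_setT x); move/(reg_iff he (in_setT x)).
  by rewrite sum_setT.
split => // x y nxy.
have key : forall v u, e v u -> cT e v u = 1.
  move=> v u evu; rewrite cT_out // hw.
  have hu : u \in outset e v by rewrite inE.
  have := hout v u hu; move/(reg_iff he hu) => ->; ring.
have [h1 [h2 h3]] := he.
case/orP: (h2 _ _ nxy) => [/key //|/key]; by rewrite cT_sym.
Qed.

Lemma DR_bwd (T : finType) (e : rel T) : tournament e ->
  (forall x, wT e x = 0) -> (forall x y, x != y -> cT e x y ^+ 2 = 1) -> doubly_regular e.
Proof.
move=> he hw hc.
have hc1 : forall x y, x != y -> cT e x y = 1.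
  move=> x y nxy.
  have hs : \sum_(y | y != x) (1 - cT e x y) = 0.
    have h0 : (0 < #|T|)%N by apply/card_gt0P; exists x.
    have := sum_cT e x; rewrite (bigD1 x) //= cT_diag //.
    under [X in _ = X]eq_bigr do rewrite hw mulr0.
    rewrite big1_eq sumrB sumr_const cardC1 -subn1 natrB //.
    by move: (\sum_(i | i != x) cT e x i) => s h; lia.
  have hnn : forall z, z != x -> 0 <= 1 - cT e x z.
    move=> z nzx; have := hc x z; rewrite eq_sym => /(_ nzx).
    by move: (cT e x z) => c hc2; rewrite subr_ge0; nia.
  have nyx : y != x by rewrite eq_sym.
  have := psumr_eq0P hnn hs nyx.
  by move: (cT e x y) => c h; lia.
split.
  by move=> u _; apply/(reg_iff he (in_setT u)); rewrite sum_setT; apply: hw.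
move=> v u hu; have evu : e v u by move: hu; rewrite inE.
apply/(reg_iff he hu).
have := cT_out he evu; rewrite hc1 ?hw.
  by move: (\sum_(z in outset e v) bT e u z) => s h; lia.
apply/eqP => evv; rewrite evv in evu; have [h1 _] := he; by have := h1 u; rewrite evu.
Qed.


Lemma ord5_cases (a b : 'I_5) :
  [|| a == b, b == ordS a, b == ordS (ordS a), a == ordS b | a == ordS (ordS b)].
Proof.
by case: a b => [[|[|[|[|[|?]]]]] ?] [[|[|[|[|[|?]]]]] ?].
Qed.

Lemma cyc_inj (T : finType) (e : rel T) (f : {ffun 'I_5 -> T}) : tournament e ->
  (forall i, e (f i) (f (ordS i))) -> injective f.
Proof.
case=> h1 [h2 h3] h a b fab.
have L : forall x, e x x -> False by move=> x hx; have := h1 x; rewrite hx.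
have A : forall x y, e x y -> e y x -> False by move=> x y hx hy; have := h3 _ _ hx; rewrite hy.
case/orP: (ord5_cases a b) => [/eqP //|].
case/orP => [/eqP E|]; first by exfalso; apply: (L (f a)); rewrite {2}fab E; apply: h.
case/orP => [/eqP E|]; first by exfalso; apply: (A (f a) (f (ordS a))); [apply: h | rewrite fab E; apply: h].
case/orP => /eqP E; first by exfalso; apply: (L (f b)); rewrite {2}(esym fab) E; apply: h.
by exfalso; apply: (A (f b) (f (ordS b))); [apply: h | rewrite -fab E; apply: h].
Qed.

Lemma cyc_set (T : finType) (e : rel T) : tournament e ->
  cyc5_seqs e = [set f : {ffun 'I_5 -> T} | [forall i, e (f i) (f (ordS i))]].
Proof.
move=> he; apply/setP => f; rewrite !inE.
case H: [forall i, e (f i) (f (ordS i))]; rewrite ?andbT ?andbF //.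
by apply/injectiveP; apply: (cyc_inj he); move/forallP: H.
Qed.

Definition hmap (T : finType) (p : T * T * T * T * T) : {ffun 'I_5 -> T} :=
  [ffun i : 'I_5 => nth p.1.1.1.1 [:: p.1.1.1.1; p.1.1.1.2; p.1.1.2; p.1.2; p.2] i].
Definition gmap (T : finType) (f : {ffun 'I_5 -> T}) : T * T * T * T * T :=
  (f (inord 0), f (inord 1), f (inord 2), f (inord 3), f (inord 4)).

Lemma hmap_bij (T : finType) : bijective (@hmap T).
Proof.
exists (@gmap T).
  by case=> [[[[x0 x1] x2] x3] x4]; rewrite /gmap /hmap !ffunE /= !inordK.
move=> f; apply/ffunP => i; rewrite /gmap /hmap ffunE /=.
have E : forall k (hk : (k < 5)%N), f (inord k) = f (Ordinal hk).
  by move=> k hk; congr (f _); apply/val_inj; rewrite /= inordK.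
by case: i => [[|[|[|[|[|k]]]]] hk] //=; rewrite E.
Qed.

Lemma sum_pair (A B : finType) (F : A * B -> int) : \sum_p F p = \sum_a \sum_b F (a, b).
Proof. by rewrite pair_bigA; apply: eq_bigr => -[a b]. Qed.

Lemma sum_ev5 (T : finType) (F : T -> T -> T -> T -> T -> int) :
  \sum_x0 \sum_x1 \sum_x2 \sum_x3 \sum_x4 F x0 x1 x2 x3 x4 =
  \sum_(i0 < #|T|) \sum_(i1 < #|T|) \sum_(i2 < #|T|) \sum_(i3 < #|T|) \sum_(i4 < #|T|)
    F (enum_val i0) (enum_val i1) (enum_val i2) (enum_val i3) (enum_val i4).
Proof.
rewrite -(@sum_ev T); apply: eq_bigr => i0 _.
rewrite -(@sum_ev T); apply: eq_bigr => i1 _.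
rewrite -(@sum_ev T); apply: eq_bigr => i2 _.
rewrite -(@sum_ev T); apply: eq_bigr => i3 _.
by rewrite -(@sum_ev T).
Qed.

Lemma card_cyc (T : finType) (e : rel T) : tournament e ->
  (#|cyc5_seqs e|%:R : int) = \tr (Am e ^+ 5).
Proof.
move=> he; rewrite cyc_set // -sum1dep_card natr_sum big_mkcond /=.
rewrite (reindex (@hmap T)); last by apply: onW_bij; apply: hmap_bij.
pose a x y : int := (e x y : nat)%:R.
transitivity (\sum_(p : T * T * T * T * T)
   a p.1.1.1.1 p.1.1.1.2 * (a p.1.1.1.2 p.1.1.2 * (a p.1.1.2 p.1.2 * (a p.1.2 p.2 * a p.2 p.1.1.1.1)))).
  apply: eq_bigr => -[[[[x0 x1] x2] x3] x4] _ /=.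
  have -> : [forall i, e (hmap (x0, x1, x2, x3, x4) i) (hmap (x0, x1, x2, x3, x4) (ordS i))]
          = [&& e x0 x1, e x1 x2, e x2 x3, e x3 x4 & e x4 x0].
    apply/forallP/and5P.
      move=> H; split.
      - by have := H (@Ordinal 5 0 isT); rewrite !ffunE.
      - by have := H (@Ordinal 5 1 isT); rewrite !ffunE.
      - by have := H (@Ordinal 5 2 isT); rewrite !ffunE.
      - by have := H (@Ordinal 5 3 isT); rewrite !ffunE.
      - by have := H (@Ordinal 5 4 isT); rewrite !ffunE.
    by case=> h01 h12 h23 h34 h40 [[|[|[|[|[|k]]]]] hk] //; rewrite !ffunE.
  rewrite /a; case: (e x0 x1); case: (e x1 x2); case: (e x2 x3); case: (e x3 x4); case: (e x4 x0);
    by rewrite /= ?mul1r ?mul0r ?mulr0.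
rewrite !sum_pair /=.
rewrite (sum_ev5 (fun x0 x1 x2 x3 x4 => a x0 x1 * (a x1 x2 * (a x2 x3 * (a x3 x4 * a x4 x0))))).
rewrite /mxtrace; apply: eq_bigr => i0 _.
rewrite !exprS expr0 mulr1 -!mulmxE.
rewrite mxE; apply: eq_bigr => i1 _; rewrite [Am e _ _]mxE mxE mulr_sumr; apply: eq_bigr => i2 _.
rewrite [Am e _ _]mxE mxE !mulr_sumr; apply: eq_bigr => i3 _.
rewrite [Am e _ _]mxE mxE !mulr_sumr; apply: eq_bigr => i4 _.
by rewrite !mxE.
Qed.


Lemma div5 n : (3 <= n)%N -> (5 %| (n + 1) * n * (n - 1) * (n - 2) * (n - 3))%N.
Proof.
move=> h3.
have hlt : ((n + 1) %% 5 < 5)%N by rewrite ltn_mod.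
case hr: ((n + 1) %% 5)%N hlt => [|[|[|[|[|r]]]]] _ //.
- by apply: dvdn_mulr; apply: dvdn_mulr; apply: dvdn_mulr; apply: dvdn_mulr; lia.
- by apply: dvdn_mulr; apply: dvdn_mulr; apply: dvdn_mulr; apply: dvdn_mull; lia.
- by apply: dvdn_mulr; apply: dvdn_mulr; apply: dvdn_mull; lia.
- by apply: dvdn_mulr; apply: dvdn_mull; lia.
- by apply: dvdn_mull; lia.
Qed.

Lemma Dterm_ge0 (T : finType) (e : rel T) i j : tournament e -> odd #|T| ->
  0 <= (Bm e *m Bm e) i j ^+ 2 - 1 - (i == j)%:R * ((#|T|%:R - 1) ^+ 2 - 1).
Proof.
move=> he hodd.
have [->|nij] := eqVneq i j.
  by rewrite F2 // mul1r sqrrN subrr.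
rewrite mul0r subr0 subr_ge0; exact: sq_ge1 (F3 he hodd nij).
Qed.

Lemma sum2_eq0 (I : finType) (F : I -> I -> int) :
  (forall i j, 0 <= F i j) -> \sum_i \sum_j F i j = 0 -> forall i j, F i j = 0.
Proof.
move=> h0 hs i j.
have hi : \sum_j F i j = 0.
  by apply: (psumr_eq0P _ hs) => // k _; apply: sumr_ge0 => l _; apply: h0.
by apply: (psumr_eq0P _ hi) => // k _; apply: h0.
Qed.

Lemma quad_pos (m : int) : 5 <= m -> 0 < m ^+ 2 - 7 * m + 12.
Proof. move=> h; nia. Qed.

Lemma G_facts (m D W V G : int) : 5 <= m -> 0 <= D -> 0 <= W -> 2 * V <= m * (m - 1) * W ->
  G = D + (m ^+ 2 - 4 * m + 6) * W - V -> 0 <= G /\ (G = 0 -> D = 0 /\ W = 0).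
Proof.
move=> h5 hD hW hV ->.
have hc := quad_pos h5.
have hcW : 0 <= (m ^+ 2 - 7 * m + 12) * W by apply: mulr_ge0 => //; lra.
have e2G : 2 * (D + (m ^+ 2 - 4 * m + 6) * W - V) =
   2 * D + (m ^+ 2 - 7 * m + 12) * W + (m * (m - 1) * W - 2 * V) by ring.
move: e2G hcW hc hV.
move: (m ^+ 2 - 7 * m + 12) (m * (m - 1) * W) (D + (m ^+ 2 - 4 * m + 6) * W - V) => c P G0 e2G hcW hc hV.
split; first lra.
move=> hG0; rewrite hG0 in e2G.
have hD0 : D = 0 by lra.
split=> //; have : c * W = 0 by lra.
by move/eqP; rewrite mulf_eq0 (negbTE (lt0r_neq0 hc)) /= => /eqP.
Qed.

Lemma nat_of_int_eq (a b : nat) (g : int) : a%:R = b%:R - 5 * g -> 0 <= g ->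
  (a <= b)%N /\ (a = b <-> g = 0).
Proof. rewrite !natz => h hg; split; [lia | split => H; lia]. Qed.

Lemma div_le (X N : nat) : (32 * X <= N)%N -> (160 * (X %/ 5) <= N)%N.
Proof. lia. Qed.

Lemma div_eq (X N : nat) : (32 * X <= N)%N -> (160 * (X %/ 5) = N)%N -> (32 * X = N)%N.
Proof. lia. Qed.

Lemma div_eq2 (X N : nat) : (5 %| N)%N -> (32 * X = N)%N -> (160 * (X %/ 5) = N)%N.
Proof. lia. Qed.

Local Close Scope ring_scope.
Unset Implicit Arguments.

Theorem theorem1 (T : finType) (e : rel T) :
  tournament e -> odd #|T| -> 5 <= #|T| ->
  let n := #|T| in
  160 * c5 e <= (n + 1) * n * (n - 1) * (n - 2) * (n - 3) /\
  (160 * c5 e = (n + 1) * n * (n - 1) * (n - 2) * (n - 3) <-> doubly_regular e).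
Proof.
move=> he hodd h5 n.
pose m : int := (#|T|%:R)%R.
pose B := Bm e.
pose W : int := (\sum_i (\sum_j B i j) ^+ 2)%R.
pose V : int := (\sum_i (\sum_j B i j * \sum_k B j k) ^+ 2)%R.
pose D : int := (\sum_i \sum_j ((B *m B) i j ^+ 2 - 1 - (i == j)%:R * ((m - 1) ^+ 2 - 1)))%R.
have [hE hD hW hV] : [/\ (32 * \tr (Am e ^+ 5) = (m + 1) * m * (m - 1) * (m - 2) * (m - 3)
                              - 5 * (D + (m ^+ 2 - 4 * m + 6) * W - V))%R,
      (0 <= D)%R, (0 <= W)%R & (2 * V <= m * (m - 1) * W)%R] := main_ineq he hodd h5.
have hX := card_cyc he.
rewrite /c5; set X := #|cyc5_seqs e|.
set Nn := (n + 1) * n * (n - 1) * (n - 2) * (n - 3).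
pose G : int := (D + (m ^+ 2 - 4 * m + 6) * W - V)%R.
have hN : (Nn%:R = (m + 1) * m * (m - 1) * (m - 2) * (m - 3) :> int)%R.
  have h1 : 1 <= n by apply: leq_trans h5.
  have h2 : 2 <= n by apply: leq_trans h5.
  have h3 : 3 <= n by apply: leq_trans h5.
  by rewrite /Nn !natrM natrD !natrB // /m.
have hmain : ((32 * X)%:R = Nn%:R - 5 * G :> int)%R.
  by rewrite natrM hX hN -hE.
have hm5 : (5%:R <= m)%R by rewrite /m ler_nat.
have [hG0 hG] := G_facts hm5 hD hW hV (erefl G).
have [hle hiff] := nat_of_int_eq hmain hG0.
split.
  exact: div_le.
split.
  move=> heq; have h32 := div_eq hle heq.
  have G0 : G = 0%R by apply/hiff.
  have [D0 W0] := hG G0.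
  apply: (DR_bwd he).
    move=> x.
    have hi : ((\sum_j B (enum_rank x) j) ^+ 2 = 0)%R.
      by apply: (psumr_eq0P _ W0) => // k _; apply: sqr_ge0.
    by move/eqP: hi; rewrite sqrf_eq0 Bw enum_rankK => /eqP.
  move=> x y nxy.
  have := sum2_eq0 (fun i j => Dterm_ge0 i j he hodd) D0 (enum_rank x) (enum_rank y).
  have -> : (enum_rank x == enum_rank y) = false.
    by apply/negbTE; rewrite (inj_eq enum_rank_inj).
  rewrite Bc !enum_rankK mul0r subr0 => /eqP; rewrite subr_eq0 => /eqP //.
move=> hdr; have [hw hc1] := DR_fwd he hdr.
have W0 : W = 0%R.
  by rewrite /W big1 // => i _; rewrite Bw hw expr0n.
have V0 : V = 0%R.
  rewrite /V big1 // => i _; rewrite big1 ?expr0n // => j _.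
  by rewrite Bw hw mulr0.
have D0 : D = 0%R.
  rewrite /D big1 // => i _; rewrite big1 // => j _.
  have [->|nij] := eqVneq i j.
    by rewrite F2 // mul1r sqrrN subrr.
  rewrite Bc hc1 ?expr1n ?subrr ?mul0r ?subr0 //.
  by rewrite (inj_eq enum_val_inj).
have G0 : G = 0%R by rewrite /G D0 W0 V0 mulr0 addr0 subr0.
have h32 : 32 * X = Nn by apply/hiff.
apply: div_eq2 h32; apply: div5; exact: leq_trans h5.
Qed.
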